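(* Consider the networked $SIRS$-$V_o$ system without media actuator (i.e. $m\equiv 0$) described in the context, with initial condition at time $t_0$ satisfying $o_i(t_0),s_i(t_0),x_i(t_0),r_i(t_0),v_i(t_0)\in[0,1]$ and $s_i(t_0)+x_i(t_0)+r_i(t_0)+v_i(t_0)=1$ for all $i\in[n]$. Then for all $t>t_0$ and all $i\in[n]$: $s_i(t)+x_i(t)+r_i(t)+v_i(t)=1$ and $s_i(t),x_i(t),r_i(t),v_i(t)\in[0,1]$.
   Context: There are $n$ nodes, $[n]=\{1,\dots,n\}$. All parameters are real and nonnegative: $a_{ij}$ (opinion-network weights), $\beta_{ij}$ (infection rates), $\gamma_i$ (recovery rates), $\omega_i$ (loss of natural immunity rates), $\delta_i$ (loss of vaccine immunity rates), $\eta^{\min}_{ij}$ and $\Delta\eta_{ij}$ (strategy-imitation rates). Let $A=[a_{ij}]$, $B=[\beta_{ij}]$, $H_{\min}=[\eta^{\min}_{ij}]$, $\Delta H=[\Delta\eta_{ij}]$. For a square matrix $M$, $k_i[M]=\sum_j M_{ij}$, $\widetilde K[M]=\mathrm{diag}(k_1[M],\dots,k_n[M])$ and $L[M]=\widetilde K[M]-M$. Let $\widetilde G=\mathrm{diag}(\gamma_i)$, $\widetilde W=\mathrm{diag}(\omega_i)$, $\widetilde D=\mathrm{diag}(\delta_i)$, and for $o\in\mathbb{R}^n$ let $H(o)=\mathrm{diag}(o)\Delta H+H_{\min}$. The state is $(o,s,x,r,v)\in(\mathbb{R}^n)^5$ (opinion on disease seriousness, susceptible, infected, recovered, vaccinated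 fractions), with $\widetilde S=\mathrm{diag}(s)$, $\widetilde R=\mathrm{diag}(r)$, and dynamics $\dot o=A(x-o)-2L[A]o$, $\dot s=\widetilde Dv-\widetilde S(Bx+H(o)v)+\widetilde Wr$, $\dot x=\widetilde SBx-\widetilde Gx$, $\dot r=\widetilde Gx-\widetilde Wr-\widetilde RH(o)v$, $\dot v=(\widetilde S+\widetilde R)H(o)v-\widetilde Dv$. *)

(* Defs.v *)
From HB Require Import structures.
From mathcomp Require Import all_boot all_order all_algebra.
From mathcomp Require Import all_classical all_reals all_analysis.
Set Implicit Arguments. Unset Strict Implicit. Unset Printing Implicit Defensive.
Import Order.TTheory GRing.Theory Num.Theory.
Import numFieldNormedType.Exports.
Local Open Scope ring_scope.
Local Open Scope classical_set_scope.

Section SIRSVo.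
Variables (R : realType) (n : nat).

Definition kdeg (M : 'I_n -> 'I_n -> R) (i : 'I_n) : R := \sum_(j < n) M i j.

Definition mxv (M : 'I_n -> 'I_n -> R) (y : 'I_n -> R) (i : 'I_n) : R :=
  \sum_(j < n) M i j * y j.

Definition lapv (M : 'I_n -> 'I_n -> R) (y : 'I_n -> R) (i : 'I_n) : R :=
  kdeg M i * y i - mxv M y i.

Definition Hmat (DH Hmin : 'I_n -> 'I_n -> R) (o : 'I_n -> R) : 'I_n -> 'I_n -> R :=
  fun i j => o i * DH i j + Hmin i j.

Definition SIRSVo_solution
  (A B Hmin DH : 'I_n -> 'I_n -> R) (gam om del : 'I_n -> R)
  (t0 : R) (o s x r v : R -> 'I_n -> R) : Prop :=
  (forall i : 'I_n,
     (fun u => o u i) y @[y --> t0^'+] --> o t0 i /\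
     (fun u => s u i) y @[y --> t0^'+] --> s t0 i /\
     (fun u => x u i) y @[y --> t0^'+] --> x t0 i /\
     (fun u => r u i) y @[y --> t0^'+] --> r t0 i /\
     (fun u => v u i) y @[y --> t0^'+] --> v t0 i) /\
  (forall t : R, t0 < t -> forall i : 'I_n,
     is_derive t 1 (fun u => o u i)
       (mxv A (fun j => x t j - o t j) i - 2 * lapv A (o t) i) /\
     is_derive t 1 (fun u => s u i)
       (del i * v t i - s t i * (mxv B (x t) i + mxv (Hmat DH Hmin (o t)) (v t) i)
        + om i * r t i) /\
     is_derive t 1 (fun u => x u i)
       (s t i * mxv B (x t) i - gam i * x t i) /\
     is_derive t 1 (fun u => r u i)
       (gam i * x t i - om i * r t i - r t i * mxv (Hmat DH Hmin (o t)) (v t) i) /\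
     is_derive t 1 (fun u => v u i)
       ((s t i + r t i) * mxv (Hmat DH Hmin (o t)) (v t) i - del i * v t i)).

End SIRSVo.

(* Main.v *)
Require Import Defs.
From HB Require Import structures.
From mathcomp Require Import all_boot all_order all_algebra.
From mathcomp Require Import all_classical all_reals all_analysis.
From mathcomp Require Import ring lra.
Import Order.TTheory GRing.Theory Num.Theory.
Import numFieldNormedType.Exports.
Local Open Scope ring_scope.
Local Open Scope classical_set_scope.
Set Implicit Arguments. Unset Strict Implicit.
Lemma left_min_deriv (R : realType) (f : R -> R) (a c df : R) : a < c ->
  is_derive c 1 f df -> (forall t, a < t < c -> f c <= f t) -> df <= 0.
Proof.
move=> ac [fd <-] cmin.
rewrite ['D_1 f c]cvg_at_leftE; last exact: fd.
apply: limr_le.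
  rewrite -(cvg_at_leftE (fun h => h^-1 *: ((f \o shift c) _ - f c))) //.
  apply: cvg_trans fd; apply: cvg_app.
  move=> A [e egt0 Ae]; exists e => // x xe xgt0; apply: Ae => //.
  exact/ltr0_neq0.
near=> h; apply: mulr_le0_ge0.
  by rewrite invr_le0; apply: ltW; near: h; exists 1 => /=.
rewrite subr_ge0 [_%:A]mulr1; apply: cmin; near: h.
exists (c - a); first by rewrite /= subr_gt0.
move=> h; rewrite /= distrC subr0.
move=> /ltr_normlP []; rewrite ltrBrDl ltrBlDl => -> _.
move=> hneg /=; lra.
Unshelve. all: by end_near. Qed.
Lemma gder (R : realType) (M u : R) :
  is_derive u 1 (fun u => expR (- (M * u))) (expR (- (M * u)) * (- M)).
Proof.
have h1 : is_derive u (1:R) (fun u : R => - (M * u)) (- M).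
  have := @is_deriveN R R R (fun u : R => M * u) u 1 M.
  apply. have := @is_deriveZ R R R id M u 1 1 _.
  by rewrite /GRing.scale /= mulr1; apply.
exact: (@is_derive1_comp R expR (fun u => - (M * u)) u _ _ _ h1).
Qed.

Lemma argm (R : realType) (I : finType) (i0 : I) (F : I -> R) :
  exists q, forall p, F q <= F p.
Proof.
exists ([arg min_(p < i0) F p])%O.
case: arg_minP => // q _ H p; exact: H.
Qed.

Lemma within_cont (R : realType) (f : R -> R) (t0 t1 : R) : t0 < t1 ->
  (forall u, t0 < u <= t1 -> derivable f u 1) ->
  f y @[y --> t0^'+] --> f t0 -> {within `[t0, t1], continuous f}.
Proof.
move=> lt hd hr; apply/continuous_within_itvP => //; split => //.
- move=> u; rewrite in_itv /= => /andP[a b].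
  apply: differentiable_continuous; apply/derivable1_diffP; apply: hd; lra.
- apply: cvg_at_left_filter.
  apply: differentiable_continuous; apply/derivable1_diffP; apply: hd; lra.
Qed.

Lemma invariance (R : realType) (I : finType) (Y DY : I -> R -> R) (t0 t1 : R) :
  t0 < t1 ->
  (forall p u, t0 < u <= t1 -> is_derive u 1 (Y p) (DY p u)) ->
  (forall p, Y p y @[y --> t0^'+] --> Y p t0) ->
  (forall p, 0 <= Y p t0) ->
  (forall C, exists K, forall u q, t0 < u <= t1 -> Y q u < 0 ->
      (forall p, Y q u <= Y p u /\ `|Y p u| <= C) -> K * Y q u <= DY q u) ->
  forall p, 0 <= Y p t1.
Proof.
move=> lt hd hr h0 hK p1.
have hc : forall p, {within `[t0, t1], continuous (Y p)}.
  move=> p; apply: within_cont => // u hu; by have [] := hd p u hu.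
have hb : forall p, exists Cp, forall u, u \in `[t0, t1]%R -> `|Y p u| <= Cp.
  move=> p; have [a _ ha] := EVT_max (ltW lt) (hc p).
  have [b _ hb] := EVT_min (ltW lt) (hc p).
  exists (`|Y p a| + `|Y p b|) => u hu.
  have := ha u hu; have := hb u hu.
  have := ler_norm (Y p a); have := ler_norm (- Y p b); rewrite normrN.
  have := normr_ge0 (Y p a); have := normr_ge0 (Y p b).
  rewrite ler_norml; lra.
have [Cf hCf] := choice hb.
set C := \sum_p `|Cf p|.
have hCp : forall p u, u \in `[t0, t1]%R -> `|Y p u| <= C.
  move=> p u hu; apply: le_trans (hCf p u hu) _.
  apply: le_trans (ler_norm _) _.
  by rewrite /C (bigD1 p) //= lerDl sumr_ge0.
have [K hKK] := hK C.
rewrite leNgt; apply/negP => neg.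
set M := `|K| + 1.
set g := fun u : R => expR (- (M * u)).
have gpos : forall u, 0 < g u by move=> u; exact: expR_gt0.
set Z := fun p u => g u * Y p u.
have hZd : forall p u, t0 < u <= t1 ->
    is_derive u 1 (Z p) (g u * DY p u + Y p u * (g u * - M)).
  move=> p u hu.
  have := @is_deriveM R R g (Y p) u 1 _ _ (@gder R M u) (hd p u hu).
  by rewrite /GRing.scale /=.
have hZr : forall p, Z p y @[y --> t0^'+] --> Z p t0.
  move=> p; apply: cvgM; last exact: hr.
  apply: cvg_at_right_filter.
  apply: differentiable_continuous; apply/derivable1_diffP.
  by have [] := @gder R M t0.
have hZc : forall p, {within `[t0, t1], continuous (Z p)}.
  move=> p; apply: within_cont => // u hu; by have [] := hZd p u hu.
have hmin : forall p, exists c, c \in `[t0, t1]%R /\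
    forall u, u \in `[t0, t1]%R -> Z p c <= Z p u.
  move=> p; have [c hc1 hc2] := EVT_min (ltW lt) (hZc p); by exists c.
have [tf htf] := choice hmin.
have [q hq] := @argm R I p1 (fun p => Z p (tf p)).
set tau := tf q.
have Zmin : forall p u, u \in `[t0, t1]%R -> Z q tau <= Z p u.
  move=> p u hu; apply: le_trans (hq p) _; exact: (proj2 (htf p)).
have t1in : t1 \in `[t0, t1]%R by rewrite in_itv /=; apply/andP; split; lra.
have Zneg : Z q tau < 0.
  apply: le_lt_trans (Zmin p1 t1 t1in) _.
  rewrite /Z; have := gpos t1; nra.
have tauin : tau \in `[t0, t1]%R := proj1 (htf q).
have := tauin; rewrite in_itv /= => /andP[ta tb].
have taugt : t0 < tau.
  rewrite lt_neqAle ta andbT; apply/eqP => e.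
  move: Zneg; rewrite /Z -e; have := gpos t0; have := h0 q; nra.
have mneg : Y q tau < 0.
  move: Zneg; rewrite /Z; have := gpos tau; nra.
have mle : forall p, Y q tau <= Y p tau.
  move=> p; have := Zmin p tau tauin; rewrite /Z.
  by rewrite ler_pM2l.
have hk := hKK tau q (ltac:(apply/andP; split; lra)) mneg
  (fun p => conj (mle p) (hCp p tau tauin)).
have dle := @left_min_deriv R _ _ _ _ taugt (hZd q tau ltac:(apply/andP; split; lra))
  (fun t ht => Zmin q t ltac:(rewrite in_itv /=; apply/andP; split; lra)).
have h2 : DY q tau - M * Y q tau <= 0.
  have := gpos tau; move: dle; set a := DY q tau; set b := Y q tau; set c := g tau.
  nra.
have := ler_norm K; rewrite /M in h2; nra.
Qed.
Lemma mxv_lb (R : realType) n (M : 'I_n -> 'I_n -> R) (y : 'I_n -> R) i L :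
  (forall j, 0 <= M i j) -> (forall j, L <= y j) -> kdeg M i * L <= mxv M y i.
Proof.
move=> hM hy; rewrite /kdeg /mxv big_distrl /=; apply: ler_sum => j _.
by apply: ler_wpM2l.
Qed.

Lemma mxv_norm (R : realType) n (M : 'I_n -> 'I_n -> R) (y : 'I_n -> R) i c :
  (forall j, 0 <= M i j) -> (forall j, `|y j| <= c) -> `|mxv M y i| <= kdeg M i * c.
Proof.
move=> hM hy; rewrite /kdeg /mxv big_distrl /=.
apply: le_trans (ler_norm_sum _ _ _) _; apply: ler_sum => j _.
by rewrite normrM (ger0_norm (hM j)); apply: ler_wpM2l.
Qed.

Lemma kdeg_ge0 (R : realType) n (M : 'I_n -> 'I_n -> R) i :
  (forall j, 0 <= M i j) -> 0 <= kdeg M i.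
Proof. by move=> hM; rewrite /kdeg sumr_ge0. Qed.

Lemma mxv_ext (R : realType) n (M : 'I_n -> 'I_n -> R) (y z : 'I_n -> R) i :
  (forall j, y j = z j) -> mxv M y i = mxv M z i.
Proof. by move=> h; rewrite /mxv; apply: eq_bigr => j _; rewrite h. Qed.

Lemma mxvB (R : realType) n (M : 'I_n -> 'I_n -> R) (y z : 'I_n -> R) i :
  mxv M (fun j => y j - z j) i = mxv M y i - mxv M z i.
Proof.
by rewrite /mxv -sumrB; apply: eq_bigr => j _; rewrite mulrBr.
Qed.

Lemma mxvD (R : realType) n (M : 'I_n -> 'I_n -> R) (y z : 'I_n -> R) i :
  mxv M (fun j => y j + z j) i = mxv M y i + mxv M z i.
Proof.
by rewrite /mxv -big_split; apply: eq_bigr => j _; rewrite mulrDr.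
Qed.

Lemma mxvZ (R : realType) n (M : 'I_n -> 'I_n -> R) (y : 'I_n -> R) a i :
  mxv M (fun j => a * y j) i = a * mxv M y i.
Proof.
by rewrite /mxv mulr_sumr; apply: eq_bigr => j _; rewrite mulrCA.
Qed.

Lemma mxv1 (R : realType) n (M : 'I_n -> 'I_n -> R) i :
  mxv M (fun _ => 1) i = kdeg M i.
Proof. by rewrite /mxv /kdeg; apply: eq_bigr => j _; rewrite mulr1. Qed.

Lemma mxvH (R : realType) n (DH Hmin : 'I_n -> 'I_n -> R) (o y : 'I_n -> R) i :
  mxv (Hmat DH Hmin o) y i = o i * mxv DH y i + mxv Hmin y i.
Proof.
rewrite /mxv /Hmat mulr_sumr -big_split; apply: eq_bigr => j _ /=.
by rewrite mulrDl mulrA.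
Qed.

Lemma prod2 (R : realType) (m a b C : R) : m < 0 -> m <= a -> m <= b ->
  `|a| <= C -> `|b| <= C -> C * m <= a * b.
Proof.
move=> hm ha hb; rewrite !ler_norml => /andP[a1 a2] /andP[b1 b2].
case: (lerP 0 a) => a0; case: (lerP 0 b) => b0; nra.
Qed.

Lemma prod3 (R : realType) (m a b c C : R) : m < 0 -> -C <= m -> m <= a -> m <= b ->
  m <= c -> `|a| <= C -> `|b| <= C -> `|c| <= C -> C ^+ 2 * m <= a * b * c.
Proof.
move=> hm hC ha hb hc; rewrite !ler_norml => /andP[a1 a2] /andP[b1 b2] /andP[c1 c2].
have hab : 0 <= a * b -> a * b <= C ^+ 2.
  move=> _; rewrite expr2; case: (lerP 0 a) => a0; case: (lerP 0 b) => b0; nra.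
have hab2 : a * b < 0 -> C * m <= a * b.
  move=> _; case: (lerP 0 a) => a0; case: (lerP 0 b) => b0; nra.
rewrite expr2 in hab *.
case: (lerP 0 (a * b)) => ab0; case: (lerP 0 c) => c0.
- nra.
- have h := hab ab0. nra.
- have h := hab2 ab0. nra.
- nra.
Qed.

Lemma selfb (R : realType) (m X L : R) : m < 0 -> `|X| <= L -> L * m <= m * X.
Proof. move=> hm; rewrite ler_norml => /andP[x1 x2]; nra. Qed.
Definition Yv (R : realType) n (o s x r v : 'I_n -> R) (k : nat) (i : 'I_n) : R :=
  match k with 0 => s i | 1 => x i | 2 => r i | 3 => v i | 4 => o i | _ => 1 - o i end.

Definition DYv (R : realType) n (A B Hmin DH : 'I_n -> 'I_n -> R) (gam om del : 'I_n -> R)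
  (o s x r v : 'I_n -> R) (k : nat) (i : 'I_n) : R :=
  match k with
  | 0 => del i * v i - s i * (mxv B x i + mxv (Hmat DH Hmin o) v i) + om i * r i
  | 1 => s i * mxv B x i - gam i * x i
  | 2 => gam i * x i - om i * r i - r i * mxv (Hmat DH Hmin o) v i
  | 3 => (s i + r i) * mxv (Hmat DH Hmin o) v i - del i * v i
  | 4 => mxv A (fun j => x j - o j) i - 2 * lapv A o i
  | _ => - (mxv A (fun j => x j - o j) i - 2 * lapv A o i)
  end.

Definition Ptot (R : realType) n (A B Hmin DH : 'I_n -> 'I_n -> R) (gam om del : 'I_n -> R) :=
  \sum_i (kdeg A i + kdeg B i + kdeg Hmin i + kdeg DH i + gam i + om i + del i).

Lemma finish (R : realType) (K c m d : R) : m < 0 -> c <= K -> c * m <= d -> K * m <= d.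
Proof. move=> hm hc hd; apply: le_trans hd; rewrite ler_wnM2r // ltW //. Qed.

Lemma key (R : realType) n (A B Hmin DH : 'I_n -> 'I_n -> R) (gam om del : 'I_n -> R)
  (hA : forall i j, 0 <= A i j) (hB : forall i j, 0 <= B i j)
  (hHmin : forall i j, 0 <= Hmin i j) (hDH : forall i j, 0 <= DH i j)
  (hgam : forall i, 0 <= gam i) (hom : forall i, 0 <= om i)
  (hdel : forall i, 0 <= del i)
  (o s x r v : 'I_n -> R) (C m : R) (k : nat) (i : 'I_n) :
  (forall j, s j + x j + r j + v j = 1) -> m < 0 -> - C <= m ->
  (forall j, m <= s j /\ `|s j| <= C) ->
  (forall j, m <= x j /\ `|x j| <= C) ->
  (forall j, m <= r j /\ `|r j| <= C) ->
  (forall j, m <= v j /\ `|v j| <= C) ->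
  (forall j, m <= o j /\ `|o j| <= C) ->
  (forall j, m <= 1 - o j /\ `|1 - o j| <= C) ->
  Yv o s x r v k i = m ->
  (4 * Ptot A B Hmin DH gam om del * (1 + C) ^+ 2) * m <= DYv A B Hmin DH gam om del o s x r v k i.
Proof.
move=> hsum hm hCm hs hx hr hv ho hw.
set P := Ptot A B Hmin DH gam om del.
have hC : 0 <= C by lra.
have rowP : forall i, kdeg A i + kdeg B i + kdeg Hmin i + kdeg DH i + gam i + om i + del i <= P.
  move=> i0; rewrite /P /Ptot (bigD1 i0) //= lerDl sumr_ge0 // => j _.
  have := kdeg_ge0 (hA j); have := kdeg_ge0 (hB j); have := kdeg_ge0 (hHmin j);
  have := kdeg_ge0 (hDH j); have := hgam j; have := hom j; have := hdel j; lra.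
have := rowP i.
have := kdeg_ge0 (hA i); have := kdeg_ge0 (hB i); have := kdeg_ge0 (hHmin i);
have := kdeg_ge0 (hDH i); have := hgam i; have := hom i; have := hdel i.
set kA := kdeg A i; set kB := kdeg B i; set kH := kdeg Hmin i; set kD := kdeg DH i.
move=> d0 om0 g0 kD0 kH0 kB0 kA0 hP.
have P0 : 0 <= P by lra.
have PC : 0 <= P * C by apply: mulr_ge0.
have PCC : 0 <= P * C ^+ 2 by apply: mulr_ge0 => //; apply: exprn_ge0.
have kBC : kB * C <= P * C by apply: ler_wpM2r => //; lra.
have kHC : kH * C <= P * C by apply: ler_wpM2r => //; lra.
have kDC : kD * C ^+ 2 <= P * C ^+ 2 by apply: ler_wpM2r => //; [apply: exprn_ge0 | lra].
have KE : 4 * P * (1 + C) ^+ 2 = 4 * P + 8 * (P * C) + 4 * (P * C ^+ 2) by rewrite !expr2; ring.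
rewrite KE.
have nH : `|mxv (Hmat DH Hmin o) v i| <= kD * C ^+ 2 + kH * C.
  rewrite mxvH; apply: le_trans (ler_normD _ _) _; rewrite normrM.
  have h1 : `|mxv DH v i| <= kD * C by apply: mxv_norm => // j; case: (hv j).
  have h2 : `|mxv Hmin v i| <= kH * C by apply: mxv_norm => // j; case: (hv j).
  have h3 : `|o i| <= C by case: (ho i).
  have h4 : `|o i| * `|mxv DH v i| <= C * (kD * C) by apply: ler_pM.
  rewrite expr2; lra.
have nB : `|mxv B x i| <= kB * C by apply: mxv_norm => // j; case: (hx j).
case: k => [|[|[|[|[|k]]]]] /= hq.
-
  rewrite hq.
  have := @selfb R m (- (mxv B x i + mxv (Hmat DH Hmin o) v i)) (kB * C + (kD * C ^+ 2 + kH * C)) hm.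
  rewrite normrN; move/(_ (le_trans (ler_normD _ _) (lerD nB nH))) => hself.
  have h1 : del i * m <= del i * v i by apply: ler_wpM2l => //; case: (hv i).
  have h2 : om i * m <= om i * r i by apply: ler_wpM2l => //; case: (hr i).
  apply: (@finish R _ (del i + om i + (kB * C + (kD * C ^+ 2 + kH * C)))) => //; lra.
-
  rewrite hq -mxvZ.
  have h1 : kB * (C * m) <= mxv B (fun j => s i * x j) i.
    apply: mxv_lb => // j; case: (hs i) => ? ?; case: (hx j) => ? ?.
    exact: prod2.
  have h2 : 0 <= - (gam i * m) by rewrite -mulrN; apply: mulr_ge0 => //; lra.
  apply: (@finish R _ (kB * C)) => //; lra.
-
  rewrite hq.
  have := @selfb R m (- mxv (Hmat DH Hmin o) v i) (kD * C ^+ 2 + kH * C) hm.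
  rewrite normrN; move/(_ nH) => hself.
  have h1 : gam i * m <= gam i * x i by apply: ler_wpM2l => //; case: (hx i).
  have h2 : 0 <= - (om i * m) by rewrite -mulrN; apply: mulr_ge0 => //; lra.
  apply: (@finish R _ (gam i + (kD * C ^+ 2 + kH * C))) => //; lra.
-
  rewrite hq mxvH.
  have e1 : (s i + r i) * (o i * mxv DH v i + mxv Hmin v i) =
    mxv DH (fun j => s i * o i * v j) i + mxv DH (fun j => r i * o i * v j) i +
    mxv Hmin (fun j => s i * v j) i + mxv Hmin (fun j => r i * v j) i.
    rewrite !mxvZ; ring.
  rewrite e1.
  have [so1 so2] := ho i; have [ss1 ss2] := hs i; have [sr1 sr2] := hr i.
  have h1 : kD * (C ^+ 2 * m) <= mxv DH (fun j => s i * o i * v j) i.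
    by apply: mxv_lb => // j; case: (hv j) => ? ?; apply: prod3.
  have h2 : kD * (C ^+ 2 * m) <= mxv DH (fun j => r i * o i * v j) i.
    by apply: mxv_lb => // j; case: (hv j) => ? ?; apply: prod3.
  have h3 : kH * (C * m) <= mxv Hmin (fun j => s i * v j) i.
    by apply: mxv_lb => // j; case: (hv j) => ? ?; apply: prod2.
  have h4 : kH * (C * m) <= mxv Hmin (fun j => r i * v j) i.
    by apply: mxv_lb => // j; case: (hv j) => ? ?; apply: prod2.
  have h5 : 0 <= - (del i * m) by rewrite -mulrN; apply: mulr_ge0 => //; lra.
  apply: (@finish R _ (2 * (kD * C ^+ 2) + 2 * (kH * C))) => //; lra.
-
  rewrite mxvB /lapv hq -/kA.
  have h1 : kA * m <= mxv A x i by apply: mxv_lb => // j; case: (hx j).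
  have h2 : kA * m <= mxv A o i by apply: mxv_lb => // j; case: (ho j).
  have h3 : 0 <= - (kA * m) by rewrite -mulrN; apply: mulr_ge0 => //; lra.
  apply: (@finish R _ (2 * kA)) => //; lra.
-
  rewrite mxvB /lapv -/kA.
  have ex : mxv A x i = kA - mxv A (fun j => s j + r j + v j) i.
    rewrite /kA -mxv1 -mxvB; apply: mxv_ext => j; have := hsum j; lra.
  have eo : mxv A o i = kA - mxv A (fun j => 1 - o j) i.
    rewrite /kA -mxv1 -mxvB; apply: mxv_ext => j; lra.
  rewrite ex eo.
  have h1 : kA * (3 * m) <= mxv A (fun j => s j + r j + v j) i.
    apply: mxv_lb => // j; case: (hs j) => ? ?; case: (hr j) => ? ?; case: (hv j) => ? ?; lra.
  have h2 : kA * m <= mxv A (fun j => 1 - o j) i by apply: mxv_lb => // j; case: (hw j).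
  have h3 : 0 <= - (kA * m) by rewrite -mulrN; apply: mulr_ge0 => //; lra.
  have e3 : o i = 1 - m by lra.
  rewrite e3.
  apply: (@finish R _ (4 * kA)) => //; lra.
Qed.

Theorem lemma1 (R : realType) (n : nat)
  (A B Hmin DH : 'I_n -> 'I_n -> R) (gam om del : 'I_n -> R)
  (hA : forall i j, 0 <= A i j) (hB : forall i j, 0 <= B i j)
  (hHmin : forall i j, 0 <= Hmin i j) (hDH : forall i j, 0 <= DH i j)
  (hgam : forall i, 0 <= gam i) (hom : forall i, 0 <= om i)
  (hdel : forall i, 0 <= del i)
  (t0 : R) (o s x r v : R -> 'I_n -> R)
  (hsol : SIRSVo_solution A B Hmin DH gam om del t0 o s x r v)
  (hinit : forall i : 'I_n,
     [/\ 0 <= o t0 i <= 1, 0 <= s t0 i <= 1, 0 <= x t0 i <= 1,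
         0 <= r t0 i <= 1 & 0 <= v t0 i <= 1])
  (hsum0 : forall i : 'I_n, s t0 i + x t0 i + r t0 i + v t0 i = 1) :
  forall t : R, t0 < t -> forall i : 'I_n,
    s t i + x t i + r t i + v t i = 1 /\
    [/\ 0 <= s t i <= 1, 0 <= x t i <= 1, 0 <= r t i <= 1 & 0 <= v t i <= 1].
Proof.
move=> t1 lt1 i.
have [hl hd] := hsol.
have hsum : forall u, t0 < u -> forall j, s u j + x u j + r u j + v u j = 1.
  move=> u hu j.
  set S := fun w => s w j + x w j + r w j + v w j.
  have dS : forall w, t0 < w -> is_derive w 1 S 0.
    move=> w hw; have [d1 [d2 [d3 [d4 d5]]]] := hd w hw j.
    have H := is_deriveD (is_deriveD (is_deriveD d2 d3) d4) d5.
    apply: is_derive_eq H _; ring.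
  have cS : {within `[t0, u], continuous S}.
    have dd : forall w, t0 < w <= u -> derivable S w 1.
      by move=> w /andP[hw _]; have [] := dS w hw.
    have [l1 [l2 [l3 [l4 l5]]]] := hl j.
    have ll : S y @[y --> t0^'+] --> S t0.
      exact: cvgD (cvgD (cvgD l2 l3) l4) l5.
    exact: (within_cont hu dd ll).
  have [c _ e] := @MVT R S (fun _ => 0) t0 u hu
    (fun w hw => dS w ltac:(move: hw; rewrite in_itv /= => /andP[]; lra)) cS.
  move: e; rewrite mul0r /S hsum0; lra.
set Y := fun (p : ('I_6 * 'I_n)%type) (t : R) =>
  Yv (o t) (s t) (x t) (r t) (v t) p.1 p.2.
set DY := fun (p : ('I_6 * 'I_n)%type) (t : R) =>
  DYv A B Hmin DH gam om del (o t) (s t) (x t) (r t) (v t) p.1 p.2.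
have inv := @invariance R _ Y DY t0 t1 lt1.
have hY : forall p, 0 <= Y p t1.
  apply: inv.
  - move=> [[k hk] j] u /andP[hu _].
    have [d1 [d2 [d3 [d4 d5]]]] := hd u hu j.
    rewrite /Y /DY /=.
    case: k hk => [|[|[|[|[|k]]]]] hk //=.
    have H := is_deriveB (@is_derive_cst R R R 1 u 1) d1.
    rewrite sub0r in H; exact: H.
  - move=> [[k hk] j].
    have [l1 [l2 [l3 [l4 l5]]]] := hl j.
    rewrite /Y /=.
    case: k hk => [|[|[|[|[|k]]]]] hk //=.
    apply: cvgB; [exact: cvg_cst | exact: l1].
  - move=> [[k hk] j]; rewrite /Y /=.
    case: (hinit j) => /andP[ho1 ho2] /andP[s1 s2] /andP[x1 x2] /andP[r1 r2] /andP[v1 v2].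
    case: k hk => [|[|[|[|[|k]]]]] hk //=; lra.
  - move=> C; exists (4 * Ptot A B Hmin DH gam om del * (1 + C) ^+ 2).
    move=> u [[k hk] j] /andP[hu _] hneg hall.
    have hCm : - C <= Y (Ordinal hk, j) u.
      by case: (hall (Ordinal hk, j)) => _; rewrite ler_norml => /andP[].
    apply: key => //.
    + exact: hsum.
    + by move=> j'; exact: (hall (@Ordinal 6 0 isT, j')).
    + by move=> j'; exact: (hall (@Ordinal 6 1 isT, j')).
    + by move=> j'; exact: (hall (@Ordinal 6 2 isT, j')).
    + by move=> j'; exact: (hall (@Ordinal 6 3 isT, j')).
    + by move=> j'; exact: (hall (@Ordinal 6 4 isT, j')).
    + by move=> j'; exact: (hall (@Ordinal 6 5 isT, j')).
have hs1 := hY (@Ordinal 6 0 isT, i).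
have hx1 := hY (@Ordinal 6 1 isT, i).
have hr1 := hY (@Ordinal 6 2 isT, i).
have hv1 := hY (@Ordinal 6 3 isT, i).
rewrite /Y /= in hs1 hx1 hr1 hv1.
have e := hsum t1 lt1 i.
split => //; split; apply/andP; split; lra.
Qed.
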